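(* Let $(\alpha_j,\rho_j)_{j\in\mathbb{Z}}$ be a sequence of pairs $(\alpha_j,\rho_j)\in\mathbb{C}^2$ with $|\alpha_j|^2+|\rho_j|^2=1$, and let $\mathcal E=\mathcal L\mathcal M$ be the associated generalized extended CMV matrix on $\ell^2(\mathbb{Z})$. Identify $\ell^2(\mathbb{Z})$ with $\ell^2(\mathbb{Z})\otimes\mathbb{C}^2$ via $\delta_{2j-1}\mapsto\delta_j^+$ and $\delta_{2j}\mapsto\delta_j^-$. Then under this identification $$\mathcal E=S_+C_1S_-C_2,$$ where $C_1,C_2$ are the coin operators with local coins $C_1(j)=\sigma_1\Theta(\alpha_{2j},\rho_{2j})$ and $C_2(j)=\sigma_1\Theta(\alpha_{2j-1},\rho_{2j-1})$, and $\sigma_1=\begin{bmatrix}0&1\\1&0\end{bmatrix}$.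
   Context: For $(\alpha,\rho)\in\mathbb{C}^2$ with $|\alpha|^2+|\rho|^2=1$, $\Theta(\alpha,\rho)=\begin{bmatrix}\bar\alpha&\rho\\ \bar\rho&-\alpha\end{bmatrix}$. $\mathcal L=\bigoplus_{j\in\mathbb{Z}}\Theta(\alpha_{2j},\rho_{2j})$ and $\mathcal M=\bigoplus_{j\in\mathbb{Z}}\Theta(\alpha_{2j+1},\rho_{2j+1})$, where each block $\Theta(\alpha_i,\rho_i)$ acts on $\ell^2(\{i,i+1\})$ as a matrix with respect to the basis $(\delta_i,\delta_{i+1})$; $\mathcal E=\mathcal L\mathcal M$. On $\ell^2(\mathbb{Z})\otimes\mathbb{C}^2$ with basis $\delta_j^\pm=\delta_j\otimes e_\pm$ ($e_+=(1,0)^\top$, $e_-=(0,1)^\top$), $S_\pm=T^{\pm1}\otimes P_\pm+\mathbb{1}\otimes P_\mp$ where $T\delta_j=\delta_{j+1}$ and $P_\pm=|e_\pm\rangle\langle e_\pm|$; a coin operator acts as $C(\delta_j\otimes v)=\delta_j\otimes C(j)v$. *)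

(* Defs.v *)
From HB Require Import structures.
From mathcomp Require Import all_boot all_order all_algebra.
From mathcomp Require Import complex.
From mathcomp Require Import reals.
Set Implicit Arguments. Unset Strict Implicit. Unset Printing Implicit Defensive.
Import Order.TTheory GRing.Theory Num.Theory.
Local Open Scope ring_scope.

Section Defs.
Variable R : realType.
Local Notation C := R[i].

Definition Theta (a r : C) : 'M[C]_2 :=
  \matrix_(i < 2, j < 2)
    if i == 0 then (if j == 0 then a^* else r)
    else (if j == 0 then r^* else - a).

Definition sigma1 : 'M[C]_2 :=
  \matrix_(i < 2, j < 2) if i == j then 0 else 1.

(* Vectors of l^2(Z) are represented by sequences Z -> C; all operators here
   are local (banded), so they act on arbitrary sequences and equality of the
   operators on l^2(Z) amounts to equality of their actions on all sequences. *)

(* Block-diagonal operator  (+)_{i = p mod 2} Theta(alpha_i, rho_i) where the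
   block Theta(alpha_i,rho_i) acts on span(delta_i, delta_(i+1)). *)
Definition blockop (p : int) (alpha rho : int -> C) (v : int -> C) (n : int) : C :=
  let i := if ~~ odd `|n - p|%N then n else n - 1 in
  let M := Theta (alpha i) (rho i) in
  let k : 'I_2 := if n == i then 0 else 1 in
  M k 0 * v i + M k 1 * v (i + 1).

Definition CMV_L (alpha rho : int -> C) := blockop 0 alpha rho.
Definition CMV_M (alpha rho : int -> C) := blockop 1 alpha rho.
Definition CMV_E (alpha rho : int -> C) (v : int -> C) : int -> C :=
  CMV_L alpha rho (CMV_M alpha rho v).

(* Vectors of l^2(Z) (x) C^2 : psi j = column vector (psi_+(j), psi_-(j)),
   e_+ = index 0, e_- = index 1. *)
Definition shiftP (psi : int -> 'cV[C]_2) (j : int) : 'cV[C]_2 :=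
  \col_(k < 2) (if k == 0 then psi (j - 1) k 0 else psi j k 0).
Definition shiftM (psi : int -> 'cV[C]_2) (j : int) : 'cV[C]_2 :=
  \col_(k < 2) (if k == 0 then psi j k 0 else psi (j + 1) k 0).
Definition coin (Cj : int -> 'M[C]_2) (psi : int -> 'cV[C]_2) (j : int) : 'cV[C]_2 :=
  Cj j *m psi j.

(* The identification  delta_(2j-1) <-> delta_j^+ , delta_(2j) <-> delta_j^- :
   (U psi)(2j-1) = psi_+(j), (U psi)(2j) = psi_-(j).  Note (n+1) %/ 2 = j
   for n = 2j-1 and n = 2j. *)
Definition ident (psi : int -> 'cV[C]_2) (n : int) : C :=
  psi ((n + 1) %/ 2)%Z (if odd `|n|%N then 0 else 1) 0.

End Defs.

(* Main.v *)
Require Import Defs.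
From HB Require Import structures.
From mathcomp Require Import all_boot all_order all_algebra.
From mathcomp Require Import complex.
From mathcomp Require Import reals.
From mathcomp Require Import ring zify.
Import Order.TTheory GRing.Theory Num.Theory.
Local Open Scope ring_scope.

Section H.
Variable R : realType.
Implicit Types (psi : int -> 'cV[R[i]]_2) (alpha rho : int -> R[i]) (v : int -> R[i]).

Lemma ident_e psi m : ident psi (m*2) = psi m 1 0.
Proof.
rewrite /ident (_ : ((m*2+1) %/ 2)%Z = m); last by lia.
by rewrite (_ : odd `|(m*2)%R|%N = false); last by lia.
Qed.

Lemma ident_o psi m : ident psi (m*2+1) = psi (m+1) 0 0.
Proof.
rewrite /ident (_ : ((m*2+1+1) %/ 2)%Z = m+1); last by lia.
by rewrite (_ : odd `|(m*2+1)%R|%N = true); last by lia.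
Qed.

Lemma L_e alpha rho v m : CMV_L alpha rho v (m*2) =
  Theta (alpha (m*2)) (rho (m*2)) 0 0 * v (m*2) + Theta (alpha (m*2)) (rho (m*2)) 0 1 * v (m*2+1).
Proof.
rewrite /CMV_L /blockop (_ : odd `|(m*2 - 0)%R|%N = false); last by lia.
by rewrite /= eqxx.
Qed.

Lemma L_o alpha rho v m : CMV_L alpha rho v (m*2+1) =
  Theta (alpha (m*2)) (rho (m*2)) 1 0 * v (m*2) + Theta (alpha (m*2)) (rho (m*2)) 1 1 * v (m*2+1).
Proof.
rewrite /CMV_L /blockop (_ : odd `|(m*2 + 1 - 0)%R|%N = true); last by lia.
rewrite /= (_ : m*2+1-1 = m*2); last by lia.
by rewrite (_ : (m*2+1 == m*2) = false); last by lia.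
Qed.

Lemma M_e alpha rho v m : CMV_M alpha rho v (m*2) =
  Theta (alpha (m*2-1)) (rho (m*2-1)) 1 0 * v (m*2-1) + Theta (alpha (m*2-1)) (rho (m*2-1)) 1 1 * v (m*2).
Proof.
rewrite /CMV_M /blockop (_ : odd `|(m*2 - 1)%R|%N = true); last by lia.
rewrite /= (_ : (m*2 == m*2-1) = false); last by lia.
by rewrite (_ : m*2-1+1 = m*2); last by lia.
Qed.

Lemma M_o alpha rho v m : CMV_M alpha rho v (m*2+1) =
  Theta (alpha (m*2+1)) (rho (m*2+1)) 0 0 * v (m*2+1) + Theta (alpha (m*2+1)) (rho (m*2+1)) 0 1 * v ((m+1)*2).
Proof.
rewrite /CMV_M /blockop (_ : odd `|(m*2 + 1 - 1)%R|%N = false); last by lia.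
by rewrite /= eqxx (_ : m*2+1+1 = (m+1)*2); last by lia.
Qed.
End H.

Theorem lemmaA1 (R : realType) (alpha rho : int -> R[i])
  (hunit : forall j, `|alpha j| ^+ 2 + `|rho j| ^+ 2 = 1)
  (psi : int -> 'cV[R[i]]_2) :
  CMV_E alpha rho (ident psi) =
  ident (shiftP
           (coin (fun j => sigma1 R *m Theta (alpha (2 * j)%R) (rho (2 * j)%R))
              (shiftM
                 (coin (fun j => sigma1 R *m Theta (alpha (2 * j - 1)%R) (rho (2 * j - 1)%R))
                    psi)))).
Proof.
apply: boolp.funext => n.
have w0 : widen_ord (leqnSn 1) (@ord_max 0) = 0 :> 'I_2 by apply/val_inj.
have w1 : (@ord_max 1) = 1 :> 'I_2 by apply/val_inj.
have [m [->|->]] : exists m, n = m*2 \/ n = m*2+1.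
  by exists (n %/ 2)%Z; lia.
- rewrite /CMV_E L_e M_e M_o (_ : m*2-1 = (m-1)*2+1); last by lia.
  rewrite !ident_o !ident_e (_ : m-1+1 = m); last by lia.
  rewrite /shiftP /shiftM /coin !mxE /= !big_ord_recr /= !big_ord0 ?add0r !mxE /= !big_ord_recr /= !big_ord0 ?add0r !mxE /= !big_ord_recr /= !big_ord0 ?add0r /=.
  rewrite (_ : 2 * m = m*2); last by lia.
  rewrite (_ : m*2-1 = (m-1)*2+1); last by lia.
  rewrite (_ : 2*(m+1)-1 = m*2+1); last by lia.
  rewrite /sigma1 /Theta !mxE /= !w0 !w1.
  ring.
- rewrite /CMV_E L_o M_e M_o (_ : m*2-1 = (m-1)*2+1); last by lia.
  rewrite !ident_o !ident_e (_ : m-1+1 = m); last by lia.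
  rewrite /shiftP /shiftM /coin !mxE /= !big_ord_recr /= !big_ord0 ?add0r !mxE /= !big_ord_recr /= !big_ord0 ?add0r !mxE /= !big_ord_recr /= !big_ord0 ?add0r /=.
  rewrite (_ : m+1-1 = m); last by lia.
  rewrite (_ : 2*(m+1)-1 = m*2+1); last by lia.
  rewrite (_ : 2 * m - 1 = (m-1)*2+1); last by lia.
  rewrite (_ : 2 * m = m*2); last by lia.
  rewrite /sigma1 /Theta !mxE /= !w0 !w1.
  ring.
Qed.
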